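(* Let $(\Phi,D)$ and $(\Psi,E)$ be domain-free s-continuous information algebras. Then $([\Phi\rightarrow\Psi]_c,D\times E)$, with pointwise combination $(f\otimes g)(\phi)=f(\phi)\otimes g(\phi)$ and focusing $f^{\Rightarrow(x,y)}(\phi)=(f(\phi^{\Rightarrow x}))^{\Rightarrow y}$, is a domain-free continuous information algebra.
   Context: A domain-free information algebra $(\Phi,D)$ consists of a set $\Phi$, a lattice $D$, a combination $\otimes$ and a focusing $(\psi,x)\mapsto\psi^{\Rightarrow x}$ ($x\in D$) such that: $\otimes$ is associative, commutative with neutral element $e$; $(\psi^{\Rightarrow y})^{\Rightarrow x}=\psi^{\Rightarrow x\wedge y}$; $(\phi^{\Rightarrow x}\otimes\psi)^{\Rightarrow x}=\phi^{\Rightarrow x}\otimes\psi^{\Rightarrow x}$; every $\psi$ has some $x$ with $\psi^{\Rightarrow x}=\psi$; $\psi\otimes\psi^{\Rightarrow x}=\psi$. Order: $\psi\le\phi$ iff $\psi\otimes\phi=\phi$; suprema refer to this order. $a\ll b$ means: for every directed $X$ with $b\le\vee X$ there is $c\in X$ with $a\le c$. $(\Phi,D)$, with $D$ having a top element, is continuous (resp. s-continuous) if there exists $\Gamma\subseteq\Phi$, closed under combination and containing $e$, such that every directed subset of $\Gamma$ has a supremum in $\Phi$ and $\phi=\vee\{\psi\in\Gamma:\psi\ll\phi\}$ for all $\phi$ (resp. $\phi^{\Rightarrow x}=\vee\{\psi\in\Gamma:\psi=\psi^{\Rightarrow x}\ll\phi\}$ for all $\phi,x$). $[\Phi\rightarrow\Psi]_c$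 denotes the set of maps $f:\Phi\to\Psi$ with $f(\vee X)=\vee f(X)$ for every directed $X\subseteq\Phi$; $D\times E$ is the product lattice. *)

(* Defs.v *)
From mathcomp Require Import all_boot all_order.
Set Implicit Arguments. Unset Strict Implicit. Unset Printing Implicit Defensive.
Import Order.TTheory.
Local Open Scope order_scope.

(* A domain-free information algebra is described on a carrier given as a
   predicate [P] on an ambient type [T] (for an algebra on a whole type take
   [P := fun _ => True]); operations are total on [T] and the axioms require
   that [P] is closed under them. *)
Section InfoAlgebra.
Variables (disp : Order.disp_t) (D : tLatticeType disp) (T : Type).
Variables (P : T -> Prop) (comb : T -> T -> T) (e : T) (foc : T -> D -> T).

Definition ia_le (a b : T) : Prop := comb a b = b.

Definition ia_subset (X : T -> Prop) : Prop := forall x, X x -> P x.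

Definition ia_is_sup (X : T -> Prop) (s : T) : Prop :=
  P s /\ (forall x, X x -> ia_le x s) /\
  (forall u, P u -> (forall x, X x -> ia_le x u) -> ia_le s u).

Definition ia_directed (X : T -> Prop) : Prop :=
  ia_subset X /\ (exists x, X x) /\
  (forall a b, X a -> X b -> exists2 c, X c & ia_le a c /\ ia_le b c).

Definition ia_way_below (a b : T) : Prop :=
  forall X, ia_directed X -> forall s, ia_is_sup X s -> ia_le b s ->
    exists2 c, X c & ia_le a c.

Definition info_algebra : Prop :=
  P e /\
      (forall a b, P a -> P b -> P (comb a b)) /\
      (forall a x, P a -> P (foc a x)) /\
      (forall a b c, P a -> P b -> P c -> comb a (comb b c) = comb (comb a b) c) /\
      (forall a b, P a -> P b -> comb a b = comb b a) /\
      (forall a, P a -> comb e a = a) /\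
      (forall a x y, P a -> foc (foc a y) x = foc a (x `&` y)) /\
      (forall a b x, P a -> P b -> foc (comb (foc a x) b) x = comb (foc a x) (foc b x)) /\
      (forall a, P a -> exists x, foc a x = a) /\
      (forall a x, P a -> comb a (foc a x) = a).

Definition ia_basis (Gamma : T -> Prop) : Prop :=
  [/\ ia_subset Gamma,
      (forall a b, Gamma a -> Gamma b -> Gamma (comb a b)),
      Gamma e &
      (forall X, ia_directed X -> (forall x, X x -> Gamma x) -> exists s, ia_is_sup X s)].

Definition continuous_IA : Prop :=
  info_algebra /\
  exists Gamma, ia_basis Gamma /\
    forall phi, P phi ->
      ia_is_sup (fun psi => Gamma psi /\ ia_way_below psi phi) phi.

Definition s_continuous_IA : Prop :=
  info_algebra /\
  exists Gamma, ia_basis Gamma /\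
    forall phi (x : D), P phi ->
      ia_is_sup (fun psi => [/\ Gamma psi, foc psi x = psi & ia_way_below psi phi])
                (foc phi x).

End InfoAlgebra.

Definition scott_continuous (Phi Psi : Type) (combP : Phi -> Phi -> Phi)
  (combQ : Psi -> Psi -> Psi) (f : Phi -> Psi) : Prop :=
  forall X : Phi -> Prop, ia_directed (fun _ => True) combP X ->
  forall s, ia_is_sup (fun _ => True) combP X s ->
    ia_is_sup (fun _ => True) combQ (fun y => exists2 x, X x & y = f x) (f s).

(* Main.v *)
Require Import Defs.
From mathcomp Require Import all_boot all_order.
From Stdlib Require Import ClassicalEpsilon FunctionalExtensionality.
Import Order.TTheory.
Local Open Scope order_scope.
Set Implicit Arguments. Unset Strict Implicit.

Section Gen.
Variables (disp : Order.disp_t) (D : tLatticeType disp) (T : Type).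
Variables (P : T -> Prop) (comb : T -> T -> T) (e : T) (foc : T -> D -> T).
Hypothesis IA : info_algebra P comb e foc.

Local Notation le := (ia_le comb).
Local Notation wb := (ia_way_below P comb).
Local Notation sup := (ia_is_sup P comb).
Local Notation dir := (ia_directed P comb).

Lemma Pe : P e. Proof. by case: IA. Qed.
Lemma Pcomb a b : P a -> P b -> P (comb a b). Proof. by case: IA => _ [h _]; apply: h. Qed.
Lemma Pfoc a x : P a -> P (foc a x). Proof. by case: IA => _ [_ [h _]]; apply: h. Qed.
Lemma combA a b c : P a -> P b -> P c -> comb a (comb b c) = comb (comb a b) c.
Proof. by case: IA => _ [_ [_ [h _]]]; apply: h. Qed.
Lemma combC a b : P a -> P b -> comb a b = comb b a.
Proof. by case: IA => _ [_ [_ [_ [h _]]]]; apply: h. Qed.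
Lemma comb0 a : P a -> comb e a = a.
Proof. by case: IA => _ [_ [_ [_ [_ [h _]]]]]; apply: h. Qed.
Lemma focfoc a x y : P a -> foc (foc a y) x = foc a (x `&` y).
Proof. by case: IA => _ [_ [_ [_ [_ [_ [h _]]]]]]; apply: h. Qed.
Lemma foccomb a b x : P a -> P b -> foc (comb (foc a x) b) x = comb (foc a x) (foc b x).
Proof. by case: IA => _ [_ [_ [_ [_ [_ [_ [h _]]]]]]]; apply: h. Qed.
Lemma focsupp a : P a -> exists x, foc a x = a.
Proof. by case: IA => _ [_ [_ [_ [_ [_ [_ [_ [h _]]]]]]]]; apply: h. Qed.
Lemma combfoc a x : P a -> comb a (foc a x) = a.
Proof. by case: IA => _ [_ [_ [_ [_ [_ [_ [_ [_ h]]]]]]]]; apply: h. Qed.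

Lemma combxx a : P a -> comb a a = a.
Proof. move=> Pa; case: (focsupp Pa) => x hx. by rewrite -{2}hx combfoc. Qed.
Lemma le_refl a : P a -> le a a. Proof. exact: combxx. Qed.
Lemma le_trans a b c : P a -> P b -> P c -> le a b -> le b c -> le a c.
Proof. rewrite /ia_le => Pa Pb Pc hab hbc. by rewrite -hbc combA // hab. Qed.
Lemma le_anti a b : P a -> P b -> le a b -> le b a -> a = b.
Proof. rewrite /ia_le => Pa Pb hab hba. by rewrite -hba combC // hab. Qed.
Lemma le_e a : P a -> le e a. Proof. exact: comb0. Qed.
Lemma le_combl a b : P a -> P b -> le a (comb a b).
Proof. move=> Pa Pb; rewrite /ia_le combA ?combxx //. Qed.
Lemma le_combr a b : P a -> P b -> le b (comb a b).
Proof. move=> Pa Pb; rewrite combC //; exact: le_combl. Qed.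
Lemma comb_lub a b u : P a -> P b -> P u -> le a u -> le b u -> le (comb a b) u.
Proof. rewrite /ia_le => Pa Pb Pu hau hbu. by rewrite -combA // hbu hau. Qed.
Lemma le_comb2 a b c d : P a -> P b -> P c -> P d -> le a c -> le b d -> le (comb a b) (comb c d).
Proof.
move=> Pa Pb Pc Pd h1 h2; apply: comb_lub => //; try exact: Pcomb.
- apply: le_trans h1 _ => //; [exact: Pcomb | exact: le_combl].
- apply: le_trans h2 _ => //; [exact: Pcomb | exact: le_combr].
Qed.
Lemma foc_le a x : P a -> le (foc a x) a.
Proof. move=> Pa; rewrite /ia_le combC ?combfoc //; exact: Pfoc. Qed.
Lemma foc_mono a b x : P a -> P b -> le a b -> le (foc a x) (foc b x).
Proof.
move=> Pa Pb hab.
have h1 : comb (foc a x) b = b.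
  by apply: le_trans hab => //; [exact: Pfoc | exact: foc_le].
by rewrite /ia_le -foccomb // h1.
Qed.
Lemma foc_top a : P a -> foc a \top = a.
Proof. move=> Pa; case: (focsupp Pa) => x hx. by rewrite -{1}hx focfoc // meet1x. Qed.

Lemma sup_ext (X Y : T -> Prop) s : (forall y, X y <-> Y y) -> sup X s -> sup Y s.
Proof.
move=> hXY [Ps [ub lub]]; split => //; split.
- by move=> y /hXY; apply: ub.
- by move=> u Pu hu; apply: lub => // y /hXY; apply: hu.
Qed.
Lemma sup_unique X s t : sup X s -> sup X t -> s = t.
Proof.
move=> [Ps [ubs lubs]] [Pt [ubt lubt]]; apply: le_anti => //.
by apply: lubs. by apply: lubt.
Qed.
Lemma sup_single s : P s -> sup (fun c => c = s) s.
Proof.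
move=> Ps; split => //; split; first by move=> x ->; exact: le_refl.
by move=> u Pu; apply.
Qed.
Lemma dir_single s : P s -> dir (fun c => c = s).
Proof.
move=> Ps; split; first by move=> x ->.
split; first by exists s.
move=> a b -> ->; exists s => //; split; exact: le_refl.
Qed.

Lemma wb_le a b : P a -> P b -> wb a b -> le a b.
Proof.
move=> Pa Pb h; case: (h _ (dir_single Pb) b (sup_single Pb) (le_refl Pb)) => c -> //.
Qed.
Lemma wb_trans_le a a' b : P a -> P a' -> le a a' -> wb a' b -> wb a b.
Proof.
move=> Pa Pa' haa' h X hX s hs hbs; case: (h X hX s hs hbs) => c Xc hc.
exists c => //; apply: le_trans haa' hc => //; case: hX => sub _; exact: sub.
Qed.
Lemma le_wb a b b' : P b -> P b' -> wb a b -> le b b' -> wb a b'.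
Proof.
move=> Pb Pb' h hbb' X hX s hs hb's; apply: (h X hX s hs).
apply: le_trans hbb' hb's => //; by case: hs.
Qed.
Lemma wb_comb a1 a2 b : P a1 -> P a2 -> wb a1 b -> wb a2 b -> wb (comb a1 a2) b.
Proof.
move=> Pa1 Pa2 h1 h2 X hX s hs hbs.
case: (h1 X hX s hs hbs) => c1 X1 l1; case: (h2 X hX s hs hbs) => c2 X2 l2.
case: (hX) => sub [_ hd]; case: (hd c1 c2 X1 X2) => c Xc [lc1 lc2].
have Pc1 := sub _ X1; have Pc2 := sub _ X2; have Pc := sub _ Xc.
exists c => //; apply: comb_lub => //.
- exact: (le_trans Pa1 Pc1 Pc l1 lc1).
- exact: (le_trans Pa2 Pc2 Pc l2 lc2).
Qed.
Lemma e_wb b : wb e b.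
Proof.
move=> X [sub [[x Xx] _]] s hs hbs; exists x => //; exact: le_e (sub _ Xx).
Qed.

Lemma dir_image (U : Type) (PU : U -> Prop) (combU : U -> U -> U) (X : U -> Prop) (f : U -> T) :
  ia_directed PU combU X -> (forall x, X x -> P (f x)) ->
  (forall a b, X a -> X b -> ia_le combU a b -> le (f a) (f b)) ->
  (forall a, X a -> ia_le combU a a) ->
  dir (fun y => exists2 x, X x & y = f x).
Proof.
move=> [sub [[x0 X0] hd]] Pf mono refl; split; first by move=> y [x Xx ->]; apply: Pf.
split; first by exists (f x0), x0.
move=> a b [xa Xa ->] [xb Xb ->]; case: (hd xa xb Xa Xb) => c Xc [l1 l2].
exists (f c); first by exists c.
split; by apply: mono.
Qed.

End Gen.

Section SCont.
Variables (disp : Order.disp_t) (D : tLatticeType disp) (T : Type).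
Variables (comb : T -> T -> T) (e : T) (foc : T -> D -> T).
Hypothesis SC : s_continuous_IA (fun _ => True) comb e foc.

Local Notation PT := (fun _ : T => True).
Local Notation le := (ia_le comb).
Local Notation wb := (ia_way_below PT comb).
Local Notation sup := (ia_is_sup PT comb).
Local Notation dir := (ia_directed PT comb).

Lemma IA_sc : info_algebra PT comb e foc. Proof. by case: SC. Qed.
Let IA := IA_sc.

Lemma contG : exists G, ia_basis PT comb e G /\ forall phi, sup (fun psi => G psi /\ wb psi phi) phi.
Proof.
case: SC => _ [G [hb hc]]; exists G; split => // phi.
have := hc phi \top I; rewrite (foc_top IA) //; apply: sup_ext => y.
rewrite (foc_top IA) //; split; [by case | by case => ? ?; split].
Qed.

Lemma wb_sup phi : sup (fun a => wb a phi) phi.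
Proof.
case: contG => G [_ hc]; case: (hc phi) => _ [_ lub].
split => //; split; first by move=> x hx; apply: (wb_le IA).
by move=> u _ hu; apply: lub => // x [_ hx]; apply: hu.
Qed.

Lemma wb_dir phi : dir (fun a => wb a phi).
Proof.
split; first by move=> ? ?.
split; first by exists e; apply: (e_wb IA).
move=> a b ha hb; exists (comb a b); first exact: (wb_comb IA).
split; [exact: (le_combl IA) | exact: (le_combr IA)].
Qed.

Lemma dcpo X : dir X -> exists s, sup X s.
Proof.
move=> hX; case: contG => G [[_ Gcomb Ge Gsup] hc].
pose Y := fun y => G y /\ exists2 x, X x & wb y x.
have hY : dir Y.
  case: (hX) => _ [[x0 X0] hd]; split; first by move=> ? ?.
  split.
    by exists e; split => //; exists x0 => //; apply: (e_wb IA).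
  move=> a b [Ga [xa Xa wa]] [Gb [xb Xb wbb]].
  case: (hd xa xb Xa Xb) => c Xc [l1 l2].
  exists (comb a b); last by split; [exact: (le_combl IA) | exact: (le_combr IA)].
  split; first exact: Gcomb.
  exists c => //; apply: (wb_comb IA) => //.
    exact: (le_wb IA _ _ wa l1).
  exact: (le_wb IA _ _ wbb l2).
case: (Gsup Y hY (fun y (hy : Y y) => proj1 hy)) => s [_ [ubs lubs]].
exists s; split => //; split.
  move=> x Xx; case: (hc x) => _ [_ lub]; apply: lub => // y [Gy wy].
  by apply: ubs; split => //; exists x.
move=> u _ hu; apply: lubs => // y [Gy [x Xx wy]].
apply: (le_trans IA) (hu x Xx) => //; exact: (wb_le IA).
Qed.

Lemma interp a s : wb a s -> exists c, wb a c /\ wb c s.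
Proof.
move=> h.
pose Y := fun y => exists z, wb y z /\ wb z s.
have hY : dir Y.
  split; first by move=> ? ?.
  split; first by exists e, e; split; apply: (e_wb IA).
  move=> y1 y2 [z1 [w1 w1']] [z2 [w2 w2']].
  exists (comb y1 y2); last by split; [exact: (le_combl IA) | exact: (le_combr IA)].
  exists (comb z1 z2); split; last exact: (wb_comb IA).
  apply: (wb_comb IA) => //.
    exact: (le_wb IA _ _ w1 (le_combl IA _ _)).
  exact: (le_wb IA _ _ w2 (le_combr IA _ _)).
have hs : sup Y s.
  split => //; split.
    move=> y [z [w w']]; apply: (le_trans IA) (wb_le IA _ _ w') => //; exact: (wb_le IA).
  move=> u _ hu; case: (wb_sup s) => _ [_ lub]; apply: lub => // z wz.
  case: (wb_sup z) => _ [_ lub']; apply: lub' => // y wy.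
  by apply: hu; exists z.
case: (h Y hY s hs (le_refl IA I)) => y [z [w w']] l.
exists z; split => //; exact: (wb_trans_le IA _ _ l w).
Qed.

Lemma wb_open X s a : dir X -> sup X s -> wb a s -> exists2 x, X x & wb a x.
Proof.
move=> hX hs h; case: (interp h) => c [w1 w2].
case: (w2 X hX s hs (le_refl IA I)) => x Xx l.
exists x => //; exact: (le_wb IA _ _ w1 l).
Qed.

Lemma foc_cont X s x : dir X -> sup X s ->
  sup (fun y => exists2 a, X a & y = foc a x) (foc s x).
Proof.
move=> hX hs; split => //; split.
  move=> y [a Xa ->]; apply: (foc_mono IA) => //; case: hs => _ [ub _]; exact: ub.
move=> u _ hu.
case: SC => _ [G [_ hc]]; case: (hc s x I) => _ [_ lub]; apply: lub => // psi [Gp fp wp].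
case: (wp X hX s hs (le_refl IA I)) => a Xa l.
rewrite -fp; apply: (le_trans IA) (hu _ _) => //; last by exists a.
exact: (foc_mono IA).
Qed.

End SCont.

Section Scott.
Variables (A B C : Type) (cA : A -> A -> A) (cB : B -> B -> B) (cC : C -> C -> C).

Lemma sc_mono (f : A -> B) a b : (forall x, cA x x = x) -> scott_continuous cA cB f ->
  ia_le cA a b -> ia_le cB (f a) (f b).
Proof.
move=> idem hf hab.
pose X := fun c => c = a \/ c = b.
have hX : ia_directed (fun _ => True) cA X.
  split; first by move=> ? ?.
  split; first by exists a; left.
  move=> x y hx hy; exists b; first by right.
  by split; [case: hx => ->; [exact: hab | exact: idem] | case: hy => ->; [exact: hab | exact: idem]].
have hs : ia_is_sup (fun _ => True) cA X b.
  split => //; split; first by move=> x [->|->]; [exact: hab | exact: idem].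
  by move=> u _ hu; apply: hu; right.
case: (hf X hX b hs) => _ [ub _]; apply: ub; exists a => //; by left.
Qed.

Lemma sc_comp (f : A -> B) (g : B -> C) : (forall x, cA x x = x) ->
  scott_continuous cA cB f -> scott_continuous cB cC g ->
  scott_continuous cA cC (fun x => g (f x)).
Proof.
move=> idem hf hg X hX s hs.
have hY : ia_directed (fun _ => True) cB (fun y => exists2 x, X x & y = f x).
  case: hX => _ [[x0 X0] hd]; split; first by move=> ? ?.
  split; first by exists (f x0), x0.
  move=> a b [xa Xa ->] [xb Xb ->]; case: (hd xa xb Xa Xb) => c Xc [l1 l2].
  exists (f c); first by exists c.
  split; exact: sc_mono.
have := hg _ hY _ (hf X hX s hs).
case=> _ [ub lub]; split => //; split.
  by move=> y [x Xx ->]; apply: ub; exists (f x) => //; exists x.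
move=> u _ hu; apply: lub => // y [z [x Xx ->] ->]; apply: hu; by exists x.
Qed.

End Scott.

Section FunSpace.
Variables (dD dE : Order.disp_t) (D : tLatticeType dD) (E : tLatticeType dE).
Variables (Phi : Type) (combP : Phi -> Phi -> Phi) (eP : Phi) (focP : Phi -> D -> Phi).
Variables (Psi : Type) (combQ : Psi -> Psi -> Psi) (eQ : Psi) (focQ : Psi -> E -> Psi).
Hypothesis SCP : s_continuous_IA (fun _ : Phi => True) combP eP focP.
Hypothesis SCQ : s_continuous_IA (fun _ : Psi => True) combQ eQ focQ.

Let IAP := IA_sc SCP.
Let IAQ := IA_sc SCQ.
Local Notation PF := (scott_continuous combP combQ).
Local Notation combF := (fun (f g : Phi -> Psi) phi => combQ (f phi) (g phi)).
Local Notation eF := (fun _ : Phi => eQ).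
Local Notation focF := (fun (f : Phi -> Psi) (xy : (D *p E)%type) phi => focQ (f (focP phi xy.1)) xy.2).
Local Notation leP := (ia_le combP).
Local Notation leQ := (ia_le combQ).
Local Notation leF := (ia_le combF).
Local Notation PTP := (fun _ : Phi => True).
Local Notation PTQ := (fun _ : Psi => True).

Lemma idemP x : combP x x = x. Proof. exact: (combxx IAP). Qed.
Lemma idemQ x : combQ x x = x. Proof. exact: (combxx IAQ). Qed.

Lemma leF_pt f g phi : leF f g -> leQ (f phi) (g phi).
Proof. by move=> h; rewrite /ia_le -[in RHS]h. Qed.
Lemma pt_leF f g : (forall phi, leQ (f phi) (g phi)) -> leF f g.
Proof. move=> h; apply: functional_extensionality => phi; exact: h. Qed.

Lemma monoF f a b : PF f -> leP a b -> leQ (f a) (f b).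
Proof. move=> hf; apply: sc_mono hf; exact: idemP. Qed.

Lemma foc_sc (S : Type) (c : S -> S -> S) (eS : S) (disp : Order.disp_t) (K : tLatticeType disp)
   (fc : S -> K -> S) x :
  s_continuous_IA (fun _ => True) c eS fc -> scott_continuous c c (fun a => fc a x).
Proof. move=> sc X hX s hs; exact: (foc_cont sc). Qed.

Lemma infoF : info_algebra PF combF eF focF.
Proof.
split.
  move=> X [_ [[x0 X0] _]] s hs; split => //; split.
    by move=> y [x _ ->]; exact: idemQ.
  by move=> u _ hu; apply: hu; exists x0.
split.
  move=> f g hf hg X hX s hs; split => //; split.
    move=> y [x Xx ->]; apply: (le_comb2 IAQ) => //; apply: monoF => //;
    by case: hs => _ [ub _]; apply: ub.
  move=> u _ hu; apply: (comb_lub IAQ) => //.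
    case: (hf X hX s hs) => _ [_ lub]; apply: lub => // y [x Xx ->].
    apply: (le_trans IAQ) (hu _ _) => //; last by exists x.
    exact: (le_combl IAQ).
  case: (hg X hX s hs) => _ [_ lub]; apply: lub => // y [x Xx ->].
  apply: (le_trans IAQ) (hu _ _) => //; last by exists x.
  exact: (le_combr IAQ).
split.
  move=> f xy hf.
  apply: (@sc_comp _ _ _ combP combQ combQ (fun phi => f (focP phi xy.1)) (fun b => focQ b xy.2)).
  - exact: idemP.
  - apply: (@sc_comp _ _ _ combP combP combQ (fun phi => focP phi xy.1) f) => //.
    + exact: idemP.
    + exact: (foc_sc _ SCP).
  - exact: (foc_sc _ SCQ).
split.
  move=> f g h _ _ _; apply: functional_extensionality => phi; exact: (combA IAQ).
split.
  move=> f g _ _; apply: functional_extensionality => phi; exact: (combC IAQ).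
split.
  move=> f _; apply: functional_extensionality => phi; exact: (comb0 IAQ).
split.
  move=> f x y _; apply: functional_extensionality => phi /=.
  rewrite (focfoc IAP) // (focfoc IAQ) //=; by rewrite [y.1 `&` _]meetC.
split.
  move=> f g x _ _; apply: functional_extensionality => phi /=.
  by rewrite (focfoc IAP) // meetxx (foccomb IAQ).
split.
  move=> f _; exists \top; apply: functional_extensionality => phi /=.
  by rewrite (foc_top IAP) // (foc_top IAQ).
move=> f [x y] hf; apply: functional_extensionality => phi /=.
rewrite (combC IAQ) //.
have h1 : leQ (focQ (f (focP phi x)) y) (f (focP phi x)) by exact: (foc_le IAQ).
have h2 : leQ (f (focP phi x)) (f phi) by apply: monoF => //; exact: (foc_le IAP).
exact: (le_trans IAQ _ _ _ h1 h2).
Qed.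


Local Notation wbP := (ia_way_below PTP combP).
Local Notation wbQ := (ia_way_below PTQ combQ).
Local Notation wbF := (ia_way_below PF combF).

Lemma dir_pt F phi : ia_directed PF combF F ->
  ia_directed PTQ combQ (fun y => exists2 g, F g & y = g phi).
Proof.
move=> hF; apply: (dir_image (PU := PF) (combU := combF) (f := fun g => g phi)) hF _ _ _ => //.
  by move=> a b _ _; apply: leF_pt.
by move=> a _; apply: pt_leF => ?; exact: idemQ.
Qed.

Lemma ptsup F : ia_directed PF combF F -> exists U, PF U /\
  (forall phi, ia_is_sup PTQ combQ (fun y => exists2 g, F g & y = g phi) (U phi)).
Proof.
move=> hF.
have H : forall phi, {s | ia_is_sup PTQ combQ (fun y => exists2 g, F g & y = g phi) s}.
  move=> phi; apply: constructive_indefinite_description; apply: (dcpo SCQ); exact: dir_pt.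
exists (fun phi => proj1_sig (H phi)); split; last by move=> phi; exact: proj2_sig (H phi).
case: (hF) => subF _.
move=> X hX s hs; split => //; split.
  move=> y [x Xx ->].
  case: (proj2_sig (H x)) => _ [_ lub]; apply: lub => // z [g Fg ->].
  case: (proj2_sig (H s)) => _ [ub _].
  apply: (le_trans IAQ (b := g s)) => //.
    apply: monoF; first exact: subF.
    by case: hs => _ [ubs _]; apply: ubs.
  by apply: ub; exists g.
move=> t _ ht.
case: (proj2_sig (H s)) => _ [_ lub]; apply: lub => // y [g Fg ->].
case: (subF g Fg X hX s hs) => _ [_ lubg]; apply: lubg => // z [x Xx ->].
apply: (le_trans IAQ (b := proj1_sig (H x))) => //.
  case: (proj2_sig (H x)) => _ [ub _]; apply: ub; by exists g.
by apply: ht; exists x.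
Qed.

Lemma ptsupF F U : ia_directed PF combF F -> PF U ->
  (forall phi, ia_is_sup PTQ combQ (fun y => exists2 g, F g & y = g phi) (U phi)) ->
  ia_is_sup PF combF F U.
Proof.
move=> hF hU hpt; split => //; split.
  move=> g Fg; apply: pt_leF => phi; case: (hpt phi) => _ [ub _]; apply: ub; by exists g.
move=> u Pu hu; apply: pt_leF => phi; case: (hpt phi) => _ [_ lub]; apply: lub => // y [g Fg ->].
exact: leF_pt (hu g Fg).
Qed.

Definition step (a : Phi) (b : Psi) : Phi -> Psi :=
  fun phi => if excluded_middle_informative (wbP a phi) then b else eQ.

Lemma step_in a b phi : wbP a phi -> step a b phi = b.
Proof. by rewrite /step; case: excluded_middle_informative. Qed.
Lemma step_out a b phi : ~ wbP a phi -> step a b phi = eQ.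
Proof. by rewrite /step; case: excluded_middle_informative. Qed.

Lemma step_sc a b : PF (step a b).
Proof.
move=> X hX s hs.
case: (excluded_middle_informative (wbP a s)) => h.
  rewrite step_in //; case: (wb_open SCP hX hs h) => x0 X0 w0.
  split => //; split.
    move=> y [x Xx ->]; case: (excluded_middle_informative (wbP a x)) => hx.
      rewrite step_in //; exact: idemQ.
    rewrite step_out //; exact: (le_e IAQ).
  move=> u _ hu; rewrite -(step_in b w0); apply: hu; by exists x0.
rewrite step_out //.
have hn : forall x, X x -> ~ wbP a x.
  move=> x Xx wx; apply: h; apply: (le_wb IAP _ _ wx) => //.
  by case: hs => _ [ub _]; apply: ub.
case: (hX) => _ [[x0 X0] _].
split => //; split.
  move=> y [x Xx ->]; rewrite step_out; [exact: idemQ | exact: hn].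
by move=> u _ _; exact: (le_e IAQ).
Qed.

Lemma step_wb a b f : PF f -> wbQ b (f a) -> wbF (step a b) f.
Proof.
move=> hf hb F hF S hS hfS.
case: (ptsup hF) => U [PU hU].
have hSU : S = U by apply: (sup_unique infoF hS); exact: ptsupF.
subst S.
have w : wbQ b (U a) := le_wb IAQ I I hb (leF_pt a hfS).
case: (w _ (dir_pt a hF) _ (hU a) (le_refl IAQ I)) => y [g Fg ->] l.
exists g => //; apply: pt_leF => phi.
case: (excluded_middle_informative (wbP a phi)) => h.
  rewrite step_in //; apply: (le_trans IAQ (b := g a)) => //.
  apply: monoF; first by case: hF => sub _; exact: sub.
  exact: (wb_le IAP).
rewrite step_out //; exact: (le_e IAQ).
Qed.

Lemma mainF : continuous_IA PF combF eF focF.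
Proof.
split; first exact: infoF.
exists PF; split.
  split.
  - by move=> ? ?.
  - move=> a b; exact: (Pcomb infoF).
  - exact: (Pe infoF).
  - move=> X hX _; case: (ptsup hX) => U [PU hU]; exists U; exact: ptsupF.
move=> f hf; split => //; split.
  by move=> g [Pg wg]; exact: (wb_le infoF).
move=> u Pu hu; apply: pt_leF => phi.
case: (wb_sup SCQ (f phi)) => _ [_ lub]; apply: lub => // b wb0.
case: (interp SCQ wb0) => b' [w1 w2].
have hA := wb_dir SCP phi.
have hsA := wb_sup SCP phi.
have himg := hf _ hA _ hsA.
have hdimg : ia_directed PTQ combQ (fun y => exists2 x, wbP x phi & y = f x).
  apply: (dir_image (PU := PTP) (combU := combP)) hA _ _ _ => //.
    by move=> x y _ _; apply: monoF.
  by move=> x _; exact: idemP.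
case: (w2 _ hdimg _ himg (le_refl IAQ I)) => y [a wa ->] l.
have wba : wbQ b (f a) by exact: (le_wb IAQ _ _ w1 l).
have := leF_pt phi (hu (step a b) (conj (step_sc a b) (step_wb hf wba))).
by rewrite step_in.
Qed.

End FunSpace.

Unset Implicit Arguments.
Set Strict Implicit.

Theorem lemma3p13 (dD dE : Order.disp_t) (D : tLatticeType dD) (E : tLatticeType dE)
  (Phi : Type) (combP : Phi -> Phi -> Phi) (eP : Phi) (focP : Phi -> D -> Phi)
  (Psi : Type) (combQ : Psi -> Psi -> Psi) (eQ : Psi) (focQ : Psi -> E -> Psi) :
  s_continuous_IA (fun _ : Phi => True) combP eP focP ->
  s_continuous_IA (fun _ : Psi => True) combQ eQ focQ ->
  @continuous_IA _ (D *p E)%type (Phi -> Psi)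
    (scott_continuous combP combQ)
    (fun f g phi => combQ (f phi) (g phi))
    (fun _ => eQ)
    (fun f xy phi => focQ (f (focP phi xy.1)) xy.2).
Proof. move=> h1 h2; exact: (@mainF dD dE D E Phi combP eP focP Psi combQ eQ focQ h1 h2). Qed.
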